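(* Let $X$ be the Hirzebruch surface of degree $e\ge0$ and let $J$ be the trivial group (acting trivially on $\operatorname{Pic}(X)$). If $e$ is odd, then $\operatorname{Am}^\chi(X,J)$ is trivial. If $e$ is even, then $\operatorname{Am}^\chi(X,J)\cong(\mathbb{Z}/2\mathbb{Z})^2$.
   Context: The Hirzebruch surface of degree $e$ is a ruled surface over $\mathbb{P}^1$ with a section of self-intersection $-e$. For $J$ trivial, $\operatorname{Am}^\chi(X,J):=\operatorname{Pic}(X)/\langle\chi(D)[D]\mid [D]\in\operatorname{Pic}(X)\rangle$, where $\chi(D)$ is the Euler–Poincaré characteristic of $\mathcal{O}_X(D)$. *)

(* Defs.v *)
From mathcomp Require Import all_boot all_order all_algebra.
Set Implicit Arguments. Unset Strict Implicit. Unset Printing Implicit Defensive.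
Import Order.TTheory GRing.Theory Num.Theory.
Local Open Scope ring_scope.

(* Model of Pic(X) for the Hirzebruch surface X = F_e (e >= 0):
   Pic(X) is free abelian of rank 2 with basis (C, f), where C is the section
   with C^2 = -e and f is a fibre: C.f = 1, f^2 = 0.
   A class a*C + b*f is encoded as the pair (a, b) : int * int. *)
Notation HPic := (int * int)%type.

Definition hint (e : nat) (D D' : HPic) : int :=
  - (e%:Z) * D.1 * D'.1 + D.1 * D'.2 + D.2 * D'.1.

Definition hcanon (e : nat) : HPic := (-2, - (e%:Z + 2)).

(* Euler-Poincare characteristic of O_X(D), via Riemann-Roch on a rational
   surface (chi(O_X) = 1): chi(D) = 1 + D.(D - K)/2 (the numerator is even). *)
Definition hchi (e : nat) (D : HPic) : int :=
  1 + ((hint e D D - hint e (hcanon e) D) %/ 2)%Z.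

Definition in_chi_subgroup (e : nat) (v : HPic) : Prop :=
  exists (n : nat) (k : 'I_n -> int) (D : 'I_n -> HPic),
    v = \sum_(i < n) (D i *~ (k i * hchi e (D i))).

(* Am^chi(X, J) for trivial J is trivial: the subgroup is all of Pic(X). *)
Definition Am_chi_trivial (e : nat) : Prop := forall v : HPic, in_chi_subgroup e v.

(* Am^chi(X, J) = Pic(X)/H is isomorphic to the abelian group G iff there is a
   surjective group homomorphism Pic(X) -> G with kernel H. *)
Definition Am_chi_isom_to (e : nat) (G : zmodType) : Prop :=
  exists phi : HPic -> G,
    (forall x y, phi (x + y) = phi x + phi y) /\
    (forall g : G, exists x, phi x = g) /\
    (forall x, phi x = 0 <-> in_chi_subgroup e x).

(* Main.v *)
Require Import Defs.
From mathcomp Require Import all_boot all_order all_algebra ring.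
Import GRing.Theory.
Local Open Scope ring_scope.

Lemma z2_all (P : 'Z_2 -> Prop) : P 0 -> P 1 -> forall x, P x.
Proof. move=> H0 H1 [[|[|n]] Hx] //.
  - by have -> : Ordinal Hx = 0 by apply/val_inj.
  - by have -> : Ordinal Hx = 1 by apply/val_inj.
Qed.

Lemma z2_key (x y m : 'Z_2) :
  x * (1 + (x*y - m*x^+2 - (m-1)*x + y)) = 0 /\
  y * (1 + (x*y - m*x^+2 - (m-1)*x + y)) = 0.
Proof. by move: x y m; do 3 (apply: z2_all => //=); split; apply/eqP. Qed.

Lemma pairMz (a b n : int) : (a, b) *~ n = (a * n, b * n).
Proof.
have h1 := raddfMz (@fst int int). have h2 := raddfMz (@snd int int).
apply: injective_projections; rewrite /= ?h1 ?h2 /= mulrzz //.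
Qed.

Lemma hchiE e a b (N : int) :
  hint e (a, b) (a, b) - hint e (hcanon e) (a, b) = N * 2 ->
  hchi e (a, b) = 1 + N.
Proof. by rewrite /hchi => ->; rewrite mulzK. Qed.

Lemma char2 : (2%N \in [pchar 'Z_2]).
Proof. by apply/andP; split. Qed.

Lemma dvd2 (n : int) : (2 %| n)%Z = (n%:~R == 0 :> 'Z_2).
Proof. exact: (dvdz_pcharf char2). Qed.

Theorem proposition7p1 (e : nat) :
  (odd e -> Am_chi_trivial e) /\
  (~~ odd e -> Am_chi_isom_to e ('Z_2 * 'Z_2)%type).
Proof.
split.
- move=> he [x y].
  have [t et] : exists t : nat, e = t.*2.+1.
    by exists e./2; rewrite -{1}(odd_double_half e) he.
  have c1 : hchi e (1, t%:Z) = 1.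
    rewrite (@hchiE _ _ _ 0) ?addr0 //.
    rewrite /hint /hcanon /= et -!muln2 intS PoszM /=; ring.
  have c2 : hchi e (1, t%:Z - 1) = -1.
    rewrite (@hchiE _ _ _ (-2)); first by [].
    rewrite /hint /hcanon /= et -!muln2 intS PoszM /=; ring.
  exists 2%N, (fun i : 'I_2 => if i == ord0 then x - x * t%:Z + y else y - x * t%:Z).
  exists (fun i : 'I_2 => if i == ord0 then (1, t%:Z) else (1, t%:Z - 1)).
  rewrite big_ord_recr big_ord_recr big_ord0 /= c1 c2 !pairMz /= add0r.
  by congr pair; simpl; ring.
- move=> he.
  have [m em] : exists m : nat, e = m.*2.
    by exists e./2; rewrite -{1}(odd_double_half e) (negbTE he).
  exists (fun v : HPic => ((v.1%:~R : 'Z_2), (v.2%:~R : 'Z_2))).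
  split; [|split].
  + by move=> [a b] [c d] /=; rewrite !rmorphD.
  + move=> [g1 g2]; exists ((g1 : nat)%:Z, (g2 : nat)%:Z) => /=.
    by rewrite -!pmulrn !natr_Zp.
  + move=> x; split.
    * case: x => a b /= [] /eqP; rewrite -dvd2 => /dvdzP [p ->] /eqP; rewrite -dvd2 => /dvdzP [q ->].
      have c1 : hchi e (1, m%:Z) = 2.
        rewrite (@hchiE _ _ _ 1); first by [].
        rewrite /hint /hcanon /= em -!muln2 PoszM /=; ring.
      have c2 : hchi e (0, 1) = 2.
        rewrite (@hchiE _ _ _ 1); first by [].
        rewrite /hint /hcanon /= em -!muln2 PoszM /=; ring.
      exists 2%N, (fun i : 'I_2 => if i == ord0 then p else q - p * m%:Z).
      exists (fun i : 'I_2 => if i == ord0 then (1, m%:Z) else (0, 1)).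
      rewrite big_ord_recr big_ord_recr big_ord0 /= c1 c2 !pairMz /= add0r.
      by congr pair; simpl; ring.
    * move=> [n [k [D ->]]].
      have h1 := raddf_sum (@fst int int). have h2 := raddf_sum (@snd int int).
      have key : forall i, (2 %| (D i *~ (k i * hchi e (D i))).1)%Z /\
                           (2 %| (D i *~ (k i * hchi e (D i))).2)%Z.
        move=> i; case: (D i) => u w.
        rewrite (@hchiE _ _ _ (u * w - m%:Z * u ^+ 2 - (m%:Z - 1) * u + w)); last first.
          rewrite /hint /hcanon /= em -!muln2 PoszM /=; ring.
        rewrite pairMz /= !dvd2.
        have [k1 k2] := z2_key (u%:~R) (w%:~R) (m%:Z%:~R).
        rewrite !(rmorphM, rmorphD, rmorphN, rmorphXn, rmorph1) /=.
        by rewrite mulrCA k1 mulr0 eqxx mulrCA k2 mulr0 eqxx.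
      rewrite h1 h2.
      have e1 : (2 %| \sum_(i < n) (D i *~ (k i * hchi e (D i))).1)%Z.
        by apply: rpred_sum => i _; case: (key i).
      have e2 : (2 %| \sum_(i < n) (D i *~ (k i * hchi e (D i))).2)%Z.
        by apply: rpred_sum => i _; case: (key i).
      move: e1 e2; rewrite !dvd2 => /eqP -> /eqP ->; by [].
Qed.
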